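(* Let $\mathbb B$ be a separable Banach space and $\mu$ a finite nonnegative Borel measure on $\mathbb B$. Then there exist a separable Banach space $\hat{\mathbb B}$ and a linear isometric embedding $\iota\colon\mathbb B\hookrightarrow\hat{\mathbb B}$ such that $\hat{\mathbb B}$ has the $\iota_\#\mu$-metric approximation property.
   Context: For a separable Banach space $\mathbb E$ and a finite nonnegative Borel measure $\nu$ on $\mathbb E$, $\mathbb E$ has the $\nu$-metric approximation property if there exists a sequence of finite-rank linear 1-Lipschitz maps $p_n\colon\mathbb E\to\mathbb E$ such that $\lim_n\|p_n(x)-x\|_{\mathbb E}=0$ for $\nu$-a.e. $x\in\mathbb E$. *)

(* Defs.v *)
From HB Require Import structures.
From mathcomp Require Import all_boot all_order all_algebra.
From mathcomp Require Import all_classical all_reals all_analysis.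
Set Implicit Arguments. Unset Strict Implicit. Unset Printing Implicit Defensive.
Import Order.TTheory GRing.Theory Num.Theory.
Import numFieldNormedType.Exports.
Local Open Scope classical_set_scope.
Local Open Scope ring_scope.

Definition borel (R : realType) (V : normedModType R) :=
  g_sigma_algebraType (@open V).

Definition separable (T : topologicalType) : Prop :=
  exists D : set T, countable D /\ dense D.

Definition finite_rank (R : realType) (E F : normedModType R) (p : E -> F) : Prop :=
  exists (k : nat) (v : 'I_k -> F),
    forall x, exists c : 'I_k -> R, p x = \sum_(i < k) c i *: v i.

Definition nu_MAP (R : realType) (E : normedModType R)
    (nu : set (borel E) -> \bar R) : Prop :=
  exists p : nat -> {linear E -> E},
    (forall n, finite_rank (p n)) /\
    (forall n (x y : E), `|p n x - p n y| <= `|x - y|) /\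
    (exists N : set (borel E), negligible nu N /\
       forall x : E, ~ N x -> (fun n => `|p n x - x|) @ \oo --> (0 : R)).

(* Main.v *)
Require Import Defs.
From HB Require Import structures.
From mathcomp Require Import all_boot all_order all_algebra.
From mathcomp Require Import all_classical all_reals all_analysis.
From mathcomp.algebra_tactics Require Import ring lra.
Set Implicit Arguments. Unset Strict Implicit. Unset Printing Implicit Defensive.
Import Order.TTheory GRing.Theory Num.Theory.
Import numFieldNormedType.Exports.
Local Open Scope classical_set_scope.
Local Open Scope ring_scope.
Section InfR.
Variable R : realType.

Definition infR {I : Type} (F : I -> R) := inf (range F).

Lemma infR_le I (F : I -> R) b : (forall t, b <= F t) -> forall t, infR F <= F t.
Proof.
move=> hb t; apply: ge_inf; last by exists t.
by exists b => _ [u _ <-]; exact: hb.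
Qed.

Lemma le_infR I (F : I -> R) b (t0 : I) : (forall t, b <= F t) -> b <= infR F.
Proof.
move=> hb; apply: lb_le_inf; first by exists (F t0), t0.
by move=> _ [u _ <-]; exact: hb.
Qed.

Lemma infR_lb I (F : I -> R) b (t0 : I) : (forall t, b <= F t) -> b <= infR F.
Proof. exact: le_infR. Qed.

Lemma infR_approx I (F : I -> R) b (t0 : I) eps : 0 < eps ->
  (forall t, b <= F t) -> exists t, F t < infR F + eps.
Proof.
move=> e0 hb; apply/not_existsP => hn.
have : infR F + eps <= infR F.
  apply: (@le_infR I F _ t0) => t; rewrite leNgt; apply/negP => h; exact: (hn t).
by rewrite gerDl leNgt e0.
Qed.

End InfR.
Section HahnBanach.
Variables (R : realType) (B : normedModType R).

Definition subl (p : B -> R) :=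
  [/\ forall y z, p (y + z) <= p y + p z,
      forall (a : R) y, 0 < a -> p (a *: y) = a * p y,
      p 0 = 0 & forall y, p y <= `|y| ].

Section subl_facts.
Variable p : B -> R.
Hypothesis hp : subl p.

Lemma subl_D y z : p (y + z) <= p y + p z. Proof. by case: hp. Qed.
Lemma subl_Z a y : 0 < a -> p (a *: y) = a * p y. Proof. by case: hp => _ h _ _; exact: h. Qed.
Lemma subl_0 : p 0 = 0. Proof. by case: hp. Qed.
Lemma subl_le y : p y <= `|y|. Proof. by case: hp. Qed.

Lemma subl_N y : 0 <= p y + p (- y).
Proof. by rewrite -subl_0 -(subrr y); exact: subl_D. Qed.

Lemma subl_ge y : - `|y| <= p y.
Proof.
have := subl_N y; have := subl_le (- y); rewrite normrN; lra.
Qed.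

Lemma subl_Zge t v : t * p v <= p (t *: v).
Proof.
have [t0|t0|->] := ltgtP t 0; last by rewrite scale0r subl_0 mul0r.
- have h1 := subl_N (t *: v).
  have h2 : p (- (t *: v)) = - t * p v by rewrite -scaleNr subl_Z ?oppr_gt0.
  rewrite h2 in h1; lra.
- by rewrite subl_Z.
Qed.

Lemma subl_lip u w : p u - p w <= `|u - w|.
Proof.
have h := subl_D w (u - w); rewrite addrC subrK in h.
have := subl_le (u - w); lra.
Qed.

End subl_facts.

Definition step (p : B -> R) (v : B) (y : B) :=
  infR (fun t : R => p (y + t *: v) - t * p v).

Section step_facts.
Variables (p : B -> R) (v : B).
Hypothesis hp : subl p.

Let F y t := p (y + t *: v) - t * p v.

Lemma step_lb y t : - p (- y) <= F y t.
Proof.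
rewrite /F; have h1 := subl_Zge hp t v.
have h2 := subl_D hp (y + t *: v) (- y).
rewrite addrC addKr in h2; lra.
Qed.

Lemma step_le y t : step p v y <= F y t.
Proof. exact: (infR_le (@step_lb y)). Qed.

Lemma step_ge y b : (forall t, b <= F y t) -> b <= step p v y.
Proof. exact: (@le_infR _ _ _ _ 0). Qed.

Lemma step_lep y : step p v y <= p y.
Proof. by have := step_le y 0; rewrite /F scale0r addr0 mul0r subr0. Qed.

Lemma step_dir y s : step p v (y + s *: v) = step p v y + s * p v.
Proof.
apply/eqP; rewrite eq_le; apply/andP; split.
- suff h : step p v (y + s *: v) - s * p v <= step p v y by lra.
  apply: step_ge => t.
  have := step_le (y + s *: v) (t - s); rewrite /F.
  rewrite -addrA -scalerDl subrKC; lra.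
- apply: step_ge => t; rewrite /F -addrA -scalerDl.
  have := step_le y (s + t); rewrite /F; lra.
Qed.

Lemma step_keep w c : (forall y s, p (y + s *: w) = p y + s * c) ->
  forall y s, step p v (y + s *: w) = step p v y + s * c.
Proof.
move=> hw y s; apply/eqP; rewrite eq_le; apply/andP; split.
- suff h : step p v (y + s *: w) - s * c <= step p v y by lra.
  apply: step_ge => t.
  have := step_le (y + s *: w) t; rewrite /F.
  by rewrite addrAC hw; lra.
- apply: step_ge => t; rewrite /F addrAC hw.
  have := step_le y t; rewrite /F; lra.
Qed.

Lemma step_subl : subl (step p v).
Proof.
split.
- move=> y z.
  suff h : forall t2, step p v (y + z) - step p v y <= F z t2.
    by have := step_ge h; lra.
  move=> t2.
  suff h : forall t1, step p v (y + z) - F z t2 <= F y t1.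
    by have := step_ge h; lra.
  move=> t1.
  have := step_le (y + z) (t1 + t2); rewrite /F.
  have h := subl_D hp (y + t1 *: v) (z + t2 *: v).
  rewrite addrACA -scalerDl in h; lra.
- move=> a y a0; apply/eqP; rewrite eq_le; apply/andP; split.
  + rewrite -ler_pdivrMl //; apply: step_ge => t.
    have := step_le (a *: y) (a * t); rewrite /F.
    rewrite -scalerA -scalerDr (subl_Z hp) // => h.
    rewrite ler_pdivrMl //; apply: (le_trans h); rewrite mulrBr mulrA; lra.
  + apply: step_ge => t; rewrite /F.
    have -> : a *: y + t *: v = a *: (y + (t / a) *: v).
      by rewrite scalerDr scalerA mulrCA mulfV ?gt_eqF // mulr1.
    rewrite (subl_Z hp) //; have := step_le y (t / a); rewrite /F => h.
    have -> : t * p v = a * ((t / a) * p v).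
      by field; rewrite gt_eqF.
    by rewrite -mulrBr ler_pM2l.
- apply/eqP; rewrite eq_le; apply/andP; split.
  + by have := step_lep 0; rewrite (subl_0 hp).
  + apply: step_ge => t; have := step_lb 0 t; by rewrite oppr0 (subl_0 hp) oppr0.
- move=> y; exact: le_trans (step_lep y) (subl_le hp y).
Qed.

End step_facts.

Section sequence.
Variables (x0 : B) (e : nat -> B).

Definition dir n := if n is n'.+1 then e n' else x0.

Fixpoint pp n : B -> R := if n is n'.+1 then step (pp n') (dir n') else Num.norm.

Lemma pp_subl n : subl (pp n).
Proof.
elim: n => [|n IH] /=; last exact: step_subl.
split; [exact: ler_normD| |exact: normr0|by []].
by move=> a y a0; rewrite normrZ gtr0_norm.
Qed.

Lemma pp_dec n m y : (n <= m)%N -> pp m y <= pp n y.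
Proof.
elim: m => [|m IH]; first by rewrite leqn0 => /eqP ->.
rewrite leq_eqVlt => /orP [/eqP -> //|]; rewrite ltnS => /IH h.
apply: (le_trans _ h) => /=; exact: (@step_lep (pp m) (dir m) (pp_subl m) y).
Qed.

Lemma pp_dir n k y s : (k < n)%N ->
  pp n (y + s *: dir k) = pp n y + s * pp k (dir k).
Proof.
elim: n y s => [//|n IH] y s; rewrite ltnS leq_eqVlt => /orP [/eqP ->|kn] /=.
  exact: (@step_dir (pp n) (dir n) (pp_subl n)).
apply: (@step_keep (pp n) (dir n) (pp_subl n)) => y' s'; exact: IH.
Qed.

Definition qq y := infR (fun n => pp n y).

Lemma pp_lb n y : - `|y| <= pp n y.
Proof. exact: subl_ge (pp_subl n) y. Qed.

Lemma qq_le n y : qq y <= pp n y.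
Proof. exact: (infR_le (@pp_lb^~ y)). Qed.

Lemma qq_ge y b : (forall n, b <= pp n y) -> b <= qq y.
Proof. exact: (@le_infR _ _ _ _ 0%N). Qed.

Lemma qq_approx y eps : 0 < eps -> exists n, pp n y < qq y + eps.
Proof. by move=> e0; apply: (@infR_approx _ _ _ _ 0%N) => // n; exact: pp_lb. Qed.

Lemma qq_subl : subl qq.
Proof.
split.
- move=> y z; apply/ler_addgt0Pr => eps e0.
  have e2 : 0 < eps / 2 by rewrite divr_gt0.
  have [n1 h1] := qq_approx y e2; have [n2 h2] := qq_approx z e2.
  have := qq_le (maxn n1 n2) (y + z).
  have := subl_D (pp_subl (maxn n1 n2)) y z.
  have := pp_dec y (leq_maxl n1 n2); have := pp_dec z (leq_maxr n1 n2).
  lra.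
- move=> a y a0; apply/eqP; rewrite eq_le; apply/andP; split.
  + rewrite -ler_pdivrMl //; apply: qq_ge => n.
    rewrite ler_pdivrMl // -(subl_Z (pp_subl n)) //; exact: qq_le.
  + apply: qq_ge => n; rewrite (subl_Z (pp_subl n)) // ler_pM2l //; exact: qq_le.
- apply/eqP; rewrite eq_le; apply/andP; split.
  + by have := qq_le 0 0; rewrite /= normr0.
  + by apply: qq_ge => n; have := pp_lb n 0; rewrite normr0 oppr0.
- by move=> y; exact: (qq_le 0).
Qed.

Lemma qq_dir k y s : qq (y + s *: dir k) = qq y + s * pp k (dir k).
Proof.
have key n : pp (n + k.+1) (y + s *: dir k) = pp (n + k.+1) y + s * pp k (dir k).
  by apply: pp_dir; rewrite addnS ltnS leq_addl.
apply/eqP; rewrite eq_le; apply/andP; split.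
- suff h : qq (y + s *: dir k) - s * pp k (dir k) <= qq y by lra.
  apply: qq_ge => n.
  have := qq_le (n + k.+1) (y + s *: dir k); rewrite key.
  have := pp_dec y (leq_addr k.+1 n); lra.
- apply: qq_ge => n.
  have h : pp (n + k.+1) y = pp (n + k.+1) (y + s *: dir k) - s * pp k (dir k).
    by rewrite key addrK.
  have := qq_le (n + k.+1) y; rewrite h.
  have := pp_dec (y + s *: dir k) (leq_addr k.+1 n); lra.
Qed.

Lemma qq_x0 : qq x0 = `|x0|.
Proof.
have := qq_dir 0 0 1; rewrite add0r scale1r mul1r /= subl_0 ?add0r //.
exact: qq_subl.
Qed.

Hypothesis e_dense : forall (z : B) (eps : R), 0 < eps -> exists k, `|z - e k| < eps.

Lemma qq_lip u w : `|qq u - qq w| <= `|u - w|.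
Proof.
rewrite ler_norml; apply/andP; split; last exact: subl_lip qq_subl u w.
have := subl_lip qq_subl w u; rewrite distrC; lra.
Qed.

Lemma qq_add y z : qq (y + z) = qq y + qq z.
Proof.
have hd k u : qq (u + e k) = qq u + qq (e k).
  have := qq_dir k.+1 u 1; rewrite scale1r mul1r /= => ->.
  by have := qq_dir k.+1 0 1; rewrite scale1r mul1r add0r /= => ->;
     rewrite (subl_0 qq_subl) add0r.
apply/eqP; rewrite -subr_eq0 -normr_le0; apply/ler_addgt0Pr => eps e0.
rewrite add0r.
have e2 : 0 < eps / 2 by rewrite divr_gt0.
have [k hk] := e_dense z e2.
have h1 := qq_lip (y + z) (y + e k).
have h2 := qq_lip (e k) z.
have hh : (y + z) - (y + e k) = z - e k by rewrite opprD addrACA subrr add0r.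
rewrite hh in h1; rewrite [`|e k - z|]distrC in h2.
rewrite hd in h1.
have -> : qq (y + z) - (qq y + qq z) = (qq (y + z) - (qq y + qq (e k))) + (qq (e k) - qq z) by ring.
apply: le_trans (ler_normD _ _) _.
have := ltW hk; lra.
Qed.

Lemma qq_opp y : qq (- y) = - qq y.
Proof.
by apply/eqP; rewrite -subr_eq0 opprK addrC -qq_add subrr (subl_0 qq_subl).
Qed.

Lemma qq_scale a y : qq (a *: y) = a * qq y.
Proof.
have [a0|a0|->] := ltgtP a 0; last by rewrite scale0r mul0r (subl_0 qq_subl).
- have -> : a *: y = - ((- a) *: y) by rewrite scaleNr opprK.
  by rewrite qq_opp (subl_Z qq_subl) ?oppr_gt0 // mulNr opprK.
- exact: (subl_Z qq_subl).
Qed.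

Lemma qq_norm y : `|qq y| <= `|y|.
Proof.
rewrite ler_norml (subl_le qq_subl) andbT.
have := subl_le qq_subl (- y); rewrite qq_opp normrN; lra.
Qed.

End sequence.

Lemma norming (e : nat -> B) :
  (forall (z : B) (eps : R), 0 < eps -> exists k, `|z - e k| < eps) ->
  forall x0 : B, exists g : B -> R,
    [/\ forall y z, g (y + z) = g y + g z,
        forall a y, g (a *: y) = a * g y,
        forall y, `|g y| <= `|y| & g x0 = `|x0| ].
Proof.
move=> he x0; exists (qq x0 e); split.
- exact: qq_add.
- exact: qq_scale.
- exact: qq_norm.
- exact: qq_x0.
Qed.

End HahnBanach.
From mathcomp Require Import zify.

Lemma tri3 (R : realType) (a b c d : R) : `|a - d| <= `|a - b| + `|b - c| + `|c - d|.
Proof.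
have -> : a - d = (a - b) + (b - c) + (c - d) by ring.
apply: le_trans (ler_normD _ _) _; rewrite lerD2r; exact: ler_normD.
Qed.

Section Rho.
Variables (R : realType) (B : normedModType R) (e : nat -> B) (g : nat -> B -> R).
Hypothesis g_bd : forall k y, `|g k y| <= `|y|.
Hypothesis g_sub : forall k y z, g k (y - z) = g k y - g k z.
Hypothesis e_dense : forall (z : B) (eps : R), 0 < eps -> exists k, `|z - e k| < eps.

Definition fl (i k j : nat) : int := Num.floor (i.+1%:R * g k (e j)).

Lemma norm_bound n : exists S : R, forall j, (j <= n)%N -> `|e j| <= S.
Proof.
elim: n => [|n [S hS]]; first by exists `|e 0| => j; rewrite leqn0 => /eqP ->.
exists (Num.max S `|e n.+1|) => j; rewrite leq_eqVlt => /orP [/eqP ->|].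
  by rewrite le_max lexx orbT.
by rewrite ltnS => /hS h; rewrite le_max h.
Qed.

Lemma fl_bound n : exists M : nat, forall k i j, (i <= n)%N -> (j <= n)%N ->
  (- (M%:Z) <= fl i k j) && (fl i k j <= M%:Z).
Proof.
have [S hS] := norm_bound n.
have S0 : 0 <= S by apply: le_trans (hS 0%N (leq0n _)).
set Y := n.+1%:R * S.
have Y0 : 0 <= Y + 1 by rewrite addr_ge0 // mulr_ge0.
exists (Num.bound (Y + 1)) => k i j hi hj.
have hM := archi_boundP Y0.
set M := Num.bound (Y + 1) in hM *.
set y := i.+1%:R * g k (e j).
have hy : `|y| <= Y.
  rewrite /y normrM ger0_norm // /Y; apply: ler_pM => //.
    by rewrite ler_nat ltnS.
  exact: le_trans (g_bd _ _) (hS _ hj).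
have hMz : (M%:Z)%:~R = M%:R :> R by rewrite pmulrn.
rewrite /fl -/y; apply/andP; split.
- rewrite Num.Theory.floor_ge_int mulrNz hMz.
  move: hy; rewrite ler_norml => /andP [h1 _]; lra.
- have : Num.floor y < M%:Z.
    rewrite Num.Theory.floor_lt_int hMz.
    move: hy; rewrite ler_norml => /andP [_ h2]; lra.
  by move/ltW.
Qed.

Definition Mb n := xget 0%N [set M | forall k i j, (i <= n)%N -> (j <= n)%N ->
  (- (M%:Z) <= fl i k j) && (fl i k j <= M%:Z)].

Lemma MbP n k i j : (i <= n)%N -> (j <= n)%N ->
  (- ((Mb n)%:Z) <= fl i k j) && (fl i k j <= (Mb n)%:Z).
Proof. by move=> hi hj; have := xgetPex 0%N (fl_bound n); apply. Qed.

Definition enc (n : nat) (z : int) : 'I_(2 * Mb n).+1 := inord (absz (z + (Mb n)%:Z)).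

Lemma enc_inj n z1 z2 : (- ((Mb n)%:Z) <= z1) && (z1 <= (Mb n)%:Z) ->
  (- ((Mb n)%:Z) <= z2) && (z2 <= (Mb n)%:Z) -> enc n z1 = enc n z2 -> z1 = z2.
Proof.
move=> /andP [h1 h2] /andP [h3 h4] /(congr1 (@nat_of_ord _)); rewrite /enc.
rewrite !inordK; try lia.
Qed.

Definition keyT (n : nat) := {ffun 'I_n.+1 * 'I_n.+1 -> 'I_(2 * Mb n).+1}.
Definition key n (k : nat) : keyT n :=
  [ffun ij : 'I_n.+1 * 'I_n.+1 => enc n (fl (nat_of_ord ij.1) k (nat_of_ord ij.2))].

Lemma key_eqP n k l : key n k = key n l ->
  forall i j, (i <= n)%N -> (j <= n)%N -> fl i k j = fl i l j.
Proof.
move=> h i j hi hj.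
have := congr1 (fun f : keyT n => f (inord i, inord j)) h; rewrite !ffunE /= !inordK //.
by apply: enc_inj; apply: MbP.
Qed.

Lemma key_eqE n k l : (forall i j, (i <= n)%N -> (j <= n)%N -> fl i k j = fl i l j) ->
  key n k = key n l.
Proof. by move=> h; apply/ffunP => -[i j]; rewrite !ffunE /= h // leq_ord. Qed.

Definition phi (n : nat) (c : keyT n) := xget 0%N [set l | key n l = c].
Definition rho (n k : nat) := @phi n (key n k).

Lemma key_rho n k : key n (rho n k) = key n k.
Proof. by rewrite /rho /phi; have := @xgetPex _ 0%N [set l | key n l = key n k]; apply; exists k. Qed.

Lemma rhoA n m k : (n <= m)%N -> rho n (rho m k) = rho n k.
Proof.
move=> nm; rewrite {1}/rho; congr phi; apply: key_eqE => i j hi hj.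
apply: (key_eqP (key_rho m k)); exact: leq_trans nm.
Qed.

Lemma rhoB n : exists N, forall k, (rho n k < N)%N.
Proof.
exists (\max_(c : keyT n) @phi n c).+1 => k; rewrite ltnS.
exact: (leq_bigmax (key n k)).
Qed.

Lemma rho_close n k j : (j <= n)%N ->
  `|g (rho n k) (e j) - g k (e j)| < n.+1%:R^-1.
Proof.
move=> hj.
have hf := key_eqP (key_rho n k) (leqnn n) hj.
move: hf; rewrite /fl.
set a := g (rho n k) (e j); set b := g k (e j).
have N0 : 0 < n.+1%:R :> R by rewrite ltr0n.
move=> hf.
have ha := Num.Theory.floor_itv (n.+1%:R * a).
have hb := Num.Theory.floor_itv (n.+1%:R * b).
rewrite hf in ha; move: ha hb; rewrite intrD.
set F := (Num.floor (n.+1%:R * b))%:~R => /andP [ha1 ha2] /andP [hb1 hb2].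
have h : `|n.+1%:R * a - n.+1%:R * b| < 1 by rewrite ltr_norml; apply/andP; split; lra.
rewrite -mulrBr normrM gtr0_norm // in h.
by rewrite -(ltr_pM2l N0) mulfV ?gt_eqF.
Qed.

Lemma rho_conv (x : B) (eps : R) : 0 < eps -> exists n0, forall n, (n0 <= n)%N ->
  forall k, `|g (rho n k) x - g k x| <= eps.
Proof.
move=> e0.
have e4 : 0 < eps / 4 by rewrite divr_gt0.
have [j hj] := e_dense x e4.
have he2 : 0 <= 2 / eps by rewrite divr_ge0 // ltW.
exists (maxn j (Num.bound (2 / eps))) => n hn k.
have hjn : (j <= n)%N by apply: leq_trans hn; exact: leq_maxl.
have hbn : (Num.bound (2 / eps) <= n)%N by apply: leq_trans hn; exact: leq_maxr.
have hb := archi_boundP he2.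
have hn1 : 2 / eps < n.+1%:R.
  apply: lt_le_trans hb _; rewrite ler_nat; exact: leq_trans hbn (leqnSn n).
have hinv : n.+1%:R^-1 < eps / 2.
  have N0 : 0 < n.+1%:R :> R by rewrite ltr0n.
  by rewrite -invf_div ltf_pV2 ?posrE ?divr_gt0.
have h2 := rho_close k hjn.
have h1 : `|g (rho n k) x - g (rho n k) (e j)| <= `|x - e j|.
  by rewrite -g_sub; exact: g_bd.
have h3 : `|g k (e j) - g k x| <= `|x - e j|.
  by rewrite distrC -g_sub; exact: g_bd.
apply: le_trans (tri3 _ (g (rho n k) (e j)) (g k (e j)) _) _.
move: hinv h2; set z := n.+1%:R^-1 => hinv h2; clearbody z.
have := ltW hj; lra.
Qed.

End Rho.
Section BhDef.
Variables (R : realType) (rho : nat -> nat -> nat).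

Definition inBh (f : nat -> R) : Prop :=
  (exists M : R, forall k, `|f k| <= M) /\
  (forall eps : R, 0 < eps -> exists n0, forall n, (n0 <= n)%N ->
     forall k, `|f (rho n k) - f k| <= eps).

Record Bh := MkBh { bval :> nat -> R ; bP : inBh bval }.

HB.instance Definition _ := gen_eqMixin Bh.
HB.instance Definition _ := gen_choiceMixin Bh.

Lemma Bh_ext (u v : Bh) : (forall k, u k = v k) -> u = v.
Proof.
case: u v => [f hf] [f' hf'] /= h.
have ef : f = f' by apply/funext.
subst f'; congr MkBh; exact: Prop_irrelevance.
Qed.

Lemma inBh_eq f g : (forall k, f k = g k) -> inBh f -> inBh g.
Proof. by move=> h; have -> : f = g by apply/funext. Qed.

Lemma inBh0 : inBh (fun _ => 0).
Proof.
split; first by exists 0 => k; rewrite normr0.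
by move=> eps e0; exists 0%N => n _ k; rewrite subrr normr0 ltW.
Qed.

Lemma inBhD f g : inBh f -> inBh g -> inBh (fun k => f k + g k).
Proof.
move=> [[M1 hM1] hf] [[M2 hM2] hg]; split.
  exists (M1 + M2) => k; apply: le_trans (ler_normD _ _) _; exact: lerD.
move=> eps e0; have e2 : 0 < eps / 2 by rewrite divr_gt0.
have [n1 h1] := hf _ e2; have [n2 h2] := hg _ e2.
exists (maxn n1 n2) => n hn k.
have := h1 n (leq_trans (leq_maxl _ _) hn) k.
have := h2 n (leq_trans (leq_maxr _ _) hn) k.
have -> : f (rho n k) + g (rho n k) - (f k + g k) =
          (f (rho n k) - f k) + (g (rho n k) - g k) by ring.
move=> ha hb; apply: le_trans (ler_normD _ _) _; lra.
Qed.

Lemma inBhZ (a : R) f : inBh f -> inBh (fun k => a * f k).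
Proof.
move=> [[M hM] hf]; split.
  exists (`|a| * M) => k; rewrite normrM; apply: ler_wpM2l => //; exact: hM.
move=> eps e0.
have c0 : 0 < `|a| + 1 by have := normr_ge0 a; lra.
have ea : 0 < eps / (`|a| + 1) by rewrite divr_gt0.
have [n0 h0] := hf _ ea; exists n0 => n hn k.
rewrite -mulrBr normrM.
apply: le_trans (ler_wpM2l (normr_ge0 a) (h0 n hn k)) _.
rewrite mulrA ler_pdivrMr //; have := normr_ge0 a; nra.
Qed.

Lemma inBhN f : inBh f -> inBh (fun k => - f k).
Proof. by move=> /(inBhZ (-1)); apply: inBh_eq => k; rewrite mulN1r. Qed.

Definition Bh0 := MkBh inBh0.
Definition BhD (u v : Bh) := MkBh (inBhD (bP u) (bP v)).
Definition BhN (u : Bh) := MkBh (inBhN (bP u)).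
Definition BhZ (a : R) (u : Bh) := MkBh (inBhZ a (bP u)).

Lemma BhDA : associative BhD.
Proof. by move=> u v w; apply: Bh_ext => k /=; rewrite addrA. Qed.
Lemma BhDC : commutative BhD.
Proof. by move=> u v; apply: Bh_ext => k /=; rewrite addrC. Qed.
Lemma BhD0 : left_id Bh0 BhD.
Proof. by move=> u; apply: Bh_ext => k /=; rewrite add0r. Qed.
Lemma BhDN : left_inverse Bh0 BhN BhD.
Proof. by move=> u; apply: Bh_ext => k /=; rewrite addNr. Qed.

HB.instance Definition _ := GRing.isZmodule.Build Bh BhDA BhDC BhD0 BhDN.

Lemma BhZA a b (v : Bh) : BhZ a (BhZ b v) = BhZ (a * b) v.
Proof. by apply: Bh_ext => k /=; rewrite mulrA. Qed.
Lemma BhZ1 : left_id 1 BhZ.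
Proof. by move=> u; apply: Bh_ext => k /=; rewrite mul1r. Qed.
Lemma BhZDr : right_distributive BhZ +%R.
Proof. by move=> a u v; apply: Bh_ext => k /=; rewrite mulrDr. Qed.
Lemma BhZDl (v : Bh) : {morph BhZ^~ v : a b / a + b}.
Proof. by move=> a b; apply: Bh_ext => k /=; rewrite mulrDl. Qed.

HB.instance Definition _ := GRing.Zmodule_isLmodule.Build R Bh BhZA BhZ1 BhZDr BhZDl.

Lemma BhE_add (u v : Bh) k : (u + v) k = u k + v k. Proof. by []. Qed.
Lemma BhE_opp (u : Bh) k : (- u) k = - u k. Proof. by []. Qed.
Lemma BhE_sub (u v : Bh) k : (u - v) k = u k - v k. Proof. by []. Qed.
Lemma BhE_scale a (u : Bh) k : (a *: u) k = a * u k. Proof. by []. Qed.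
Lemma BhE_zero k : (0 : Bh) k = 0. Proof. by []. Qed.

Definition nrm (u : Bh) : R := sup (range (fun k => `|u k|)).

Lemma nrm_ub (u : Bh) k : `|u k| <= nrm u.
Proof.
case: (bP u) => -[M hM] _.
apply: ub_le_sup; last by exists k.
by exists M => _ [i _ <-]; exact: hM.
Qed.

Lemma nrm_le (u : Bh) b : (forall k, `|u k| <= b) -> nrm u <= b.
Proof.
move=> h; apply: ge_sup; first by exists `|u 0%N|, 0%N.
by move=> _ [i _ <-]; exact: h.
Qed.

Lemma nrm_ge0 (u : Bh) : 0 <= nrm u.
Proof. exact: le_trans (normr_ge0 _) (nrm_ub u 0%N). Qed.

Lemma nrmD (u v : Bh) : nrm (u + v) <= nrm u + nrm v.
Proof.
apply: nrm_le => k; rewrite BhE_add; apply: le_trans (ler_normD _ _) _.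
exact: lerD (nrm_ub _ _) (nrm_ub _ _).
Qed.

Lemma nrmZ (a : R) (u : Bh) : nrm (a *: u) = `|a| * nrm u.
Proof.
apply/eqP; rewrite eq_le; apply/andP; split.
  apply: nrm_le => k; rewrite BhE_scale normrM.
  by apply: ler_wpM2l => //; exact: nrm_ub.
have [->|a0] := eqVneq a 0; first by rewrite normr0 mul0r nrm_ge0.
have na : 0 < `|a| by rewrite normr_gt0.
rewrite mulrC -ler_pdivlMr //; apply: nrm_le => k.
rewrite ler_pdivlMr // mulrC -normrM -BhE_scale; exact: nrm_ub.
Qed.

Lemma nrm0 (u : Bh) : nrm u = 0 -> u = 0.
Proof.
move=> h; apply: Bh_ext => k; rewrite BhE_zero.
by apply/eqP; rewrite -normr_le0 -h nrm_ub.
Qed.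

HB.instance Definition _ := Lmodule_isNormed.Build R Bh nrmD nrmZ nrm0.

Lemma BhnormE (u : Bh) : `|u| = nrm u. Proof. by []. Qed.

End BhDef.
Section BhComplete.
Variables (R : realType) (rho : nat -> nat -> nat).

Lemma Bh_ball (x y : Bh R rho) (eps : R) : ball x eps y -> forall k, `|x k - y k| < eps.
Proof.
rewrite -ball_normE /ball_ /= => h k; apply: le_lt_trans _ h.
rewrite -BhE_sub BhnormE; exact: nrm_ub.
Qed.

Lemma Bh_cauchy_cvg (F : set_system (Bh R rho)) : ProperFilter F -> cauchy F -> cvg F.
Proof.
move=> FF /cauchyP Fc.
pose ev k := fun u : Bh R rho => u k.
have cv k : cvg (ev k @ F).
  apply: R_complete; apply/cauchy_exP => eps e0.
  have [x hx] := Fc eps e0; exists (x k).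
  have hb : F (ev k @^-1` ball (x k) eps).
    apply: (filterS _ hx) => u /Bh_ball /(_ k) h /=.
    by rewrite /ev -ball_normE /ball_ /=.
  exact: hb.
set f := fun k => lim (ev k @ F).
have hf k : ev k @ F --> f k := cv k.
have key (eps : R) (x : Bh R rho) : 0 < eps -> F (ball x eps) -> forall k, `|x k - f k| <= eps.
  move=> e0 hx k; apply/ler_addgt0Pr => d d0.
  have h2' := cvgr_dist_lt _ _ (hf k) _ d0.
  have h2 : F [set u | `|f k - u k| < d] := h2' (@filter_filter _ F FF).
  have hI : F (ball x eps `&` [set u | `|f k - u k| < d]) := (@filterI _ F (@filter_filter _ F FF) _ _ hx h2).
  have [u [hu1 hu2]] := filter_ex hI.
  have := Bh_ball hu1 k; move: hu2 => /=; rewrite distrC => hu2.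
  have := ler_distD (u k) (x k) (f k); lra.
have hfB : inBh rho f.
  split.
    have [x hx] := Fc 1 ltr01.
    case: (bP x) => -[M hM] _; exists (M + 1) => k.
    have := key 1 x ltr01 hx k; have := hM k.
    have := ler_normB (x k) (x k - f k).
    have -> : x k - (x k - f k) = f k by ring.
    lra.
  move=> eps e0; have e3 : 0 < eps / 3 by rewrite divr_gt0.
  have [x hx] := Fc _ e3; case: (bP x) => _ hxc; have [n0 h0] := hxc _ e3.
  exists n0 => n hn k.
  have h1 := key _ x e3 hx (rho n k); have h2 := key _ x e3 hx k.
  have h3 := h0 n hn k.
  rewrite distrC in h1.
  have := tri3 (f (rho n k)) (x (rho n k)) (x k) (f k); lra.
apply/cvg_ex; exists (MkBh hfB).
apply/fcvgrPdist_lt => eps e0.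
have e2 : 0 < eps / 2 by rewrite divr_gt0.
have e4 : 0 < eps / 4 by rewrite divr_gt0.
have [x hx] := Fc _ e4.
have hF := hx; apply: filterS hF => t /Bh_ball htx.
rewrite BhnormE; apply: le_lt_trans (_ : _ <= eps / 2) _; last by lra.
apply: nrm_le => k; rewrite BhE_sub /=.
have := key _ x e4 hx k; have := htx k.
have := ler_distD (x k) (f k) (t k); rewrite (distrC (f k) (x k)); lra.
Qed.

HB.instance Definition _ := Uniform_isComplete.Build (Bh R rho) Bh_cauchy_cvg.

End BhComplete.

Lemma Bh_sum_eval (R : realType) (rho : nat -> nat -> nat) (I : Type) (s : seq I)
  (P : pred I) (F : I -> Bh R rho) k :
  (\sum_(i <- s | P i) F i) k = \sum_(i <- s | P i) F i k.
Proof. by elim/big_rec2: _ => // i y1 y2 _ <-. Qed.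

Section BhMAP.
Variables (R : realType) (rho : nat -> nat -> nat).
Hypothesis rhoA : forall n m k, (n <= m)%N -> rho n (rho m k) = rho n k.
Hypothesis rhoB : forall n, exists N, forall k, (rho n k < N)%N.

Lemma bound_fin (h : nat -> R) N : exists M, forall i, (i < N)%N -> `|h i| <= M.
Proof.
exists (\sum_(i < N) `|h i|) => i hi.
rewrite (bigD1 (Ordinal hi)) //= lerDl sumr_ge0 // => j _; exact: normr_ge0.
Qed.

Lemma inBh_rho n (h : nat -> R) : inBh rho (fun k => h (rho n k)).
Proof.
split.
  have [N hN] := rhoB n; have [M hM] := bound_fin h N.
  by exists M => k; exact: hM _ (hN k).
by move=> eps e0; exists n => m hm k; rewrite rhoA // subrr normr0 ltW.
Qed.

Definition Pn n (u : Bh R rho) : Bh R rho := MkBh (inBh_rho n u).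

Lemma Pn_lin n : linear (Pn n).
Proof. by move=> a u v; apply: Bh_ext => k. Qed.

HB.instance Definition _ n := GRing.isLinear.Build R (Bh R rho) (Bh R rho) _ (Pn n) (Pn_lin n).

Lemma Pn_rank n : finite_rank (Pn n).
Proof.
have [N hN] := rhoB n.
exists N, (fun i : 'I_N => MkBh (inBh_rho n (fun j => ((j == val i)%:R : R)))).
move=> x; exists (fun i : 'I_N => x (val i)).
apply: Bh_ext => k; rewrite Bh_sum_eval /=.
rewrite (bigD1 (Ordinal (hN k))) //= eqxx mulr1 big1 ?addr0 // => i hi.
have -> : (rho n k == val i) = false.
  apply/negbTE; apply: contra hi => /eqP h; apply/eqP/val_inj => /=; by rewrite h.
by rewrite mulr0.
Qed.

Lemma Pn_lip n (x y : Bh R rho) : `|Pn n x - Pn n y| <= `|x - y|.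
Proof.
rewrite !BhnormE; apply: nrm_le => k.
rewrite BhE_sub /= -BhE_sub; exact: nrm_ub.
Qed.

Lemma Pn_cvg (x : Bh R rho) : (fun n => `|Pn n x - x|) @ \oo --> (0 : R).
Proof.
apply/cvgrPdist_le => eps e0.
case: (bP x) => _ /(_ eps e0) [n0 h0].
exists n0 => // n /= hn.
rewrite sub0r normrN ger0_norm // BhnormE; apply: nrm_le => k.
rewrite BhE_sub /=; exact: h0.
Qed.

Definition mkD (p : nat * seq rat) : Bh R rho :=
  MkBh (inBh_rho p.1 (fun j => ratr (nth 0 p.2 j))).

Lemma Bh_separable : separable (Bh R rho).
Proof.
exists (range mkD); split.
  exact: card_le_trans (card_image_le _ _) (countableP _).
move=> O [u Ou] oO.
have : nbhs u O by apply: open_nbhs_nbhs; split.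
move=> /nbhs_ballP [eps e0 hb].
have e4 : 0 < eps / 4 by rewrite divr_gt0.
case: (bP u) => _ /(_ _ e4) [n0 h0].
have [N hN] := rhoB n0.
have hq : forall i : nat, exists q : rat, `|ratr q - u i| < eps / 4.
  move=> i; have [q hq] := @rat_in_itvoo R (u i - eps / 4) (u i + eps / 4) ltac:(lra).
  exists q; move: hq; rewrite in_itv /= => /andP [h1 h2].
  rewrite ltr_norml; apply/andP; split; lra.
have [q hqP] := choice hq.
set d := mkD (n0, map q (iota 0 N)).
exists d; split; last by exists (n0, map q (iota 0 N)).
apply: hb; rewrite -ball_normE /ball_ /= BhnormE.
apply: (le_lt_trans (y := eps / 2)); last by lra.
apply: nrm_le => k; rewrite BhE_sub /= (nth_map 0%N); last by rewrite size_iota.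
rewrite nth_iota // add0n.
have := hqP (rho n0 k); have := h0 n0 (leqnn _) k.
have := ler_distD (u (rho n0 k)) (u k) (ratr (q (rho n0 k))).
rewrite (distrC (u k) (u (rho n0 k))) (distrC (u (rho n0 k)) (ratr _)); lra.
Qed.

End BhMAP.
Section Emb.
Variables (R : realType) (B : normedModType R) (e : nat -> B) (g : nat -> B -> R).
Hypothesis g_add : forall k y z, g k (y + z) = g k y + g k z.
Hypothesis g_scale : forall k a y, g k (a *: y) = a * g k y.
Hypothesis g_bd : forall k y, `|g k y| <= `|y|.
Hypothesis g_norm : forall k, g k (e k) = `|e k|.
Hypothesis e_dense : forall (z : B) (eps : R), 0 < eps -> exists k, `|z - e k| < eps.

Lemma g_sub k y z : g k (y - z) = g k y - g k z.
Proof. by rewrite g_add -scaleN1r g_scale mulN1r. Qed.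

Lemma inBh_emb (x : B) : inBh (rho e g) (fun k => g k x).
Proof.
split; first by exists `|x|.
by move=> eps e0; exact: (rho_conv g_bd g_sub e_dense).
Qed.

Definition emb (x : B) : Bh R (rho e g) := MkBh (inBh_emb x).

Lemma emb_lin : linear emb.
Proof. by move=> a u v; apply: Bh_ext => k /=; rewrite g_add g_scale. Qed.

HB.instance Definition _ := GRing.isLinear.Build R B (Bh R (rho e g)) _ emb emb_lin.

Lemma emb_iso (x : B) : `|emb x| = `|x|.
Proof.
rewrite BhnormE; apply/eqP; rewrite eq_le; apply/andP; split.
  by apply: nrm_le => k /=.
apply/ler_addgt0Pr => d d0.
have d2 : 0 < d / 2 by rewrite divr_gt0.
have [j hj] := e_dense x d2.
have h1 := nrm_ub (emb x) j; rewrite /= in h1.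
have h2 : `|g j (e j) - g j x| <= `|x - e j|.
  by rewrite -g_sub distrC; exact: g_bd.
rewrite g_norm in h2.
have h3 := ler_normD (e j) (x - e j); rewrite addrC subrK in h3.
have h4 := ler_norm (g j x).
have h5 := le_trans (ler_norm _) h2.
lra.
Qed.

End Emb.

Lemma dense_seq (R : realType) (B : normedModType R) :
  separable B -> exists e : nat -> B,
    forall (z : B) (eps : R), 0 < eps -> exists k, `|z - e k| < eps.
Proof.
move=> [D [cD dD]].
have /pcard_surjP [f hf] := cD.
exists f => z eps e0.
have [w [hw Dw]] := dD (ball z eps) (ex_intro _ z (ballxx z e0)) (ball_open z eps).
have [k _ fk] := hf w Dw.
by exists k; move: hw; rewrite -ball_normE /ball_ /= fk.
Qed.

Unset Implicit Arguments.

Theorem lemma2p4 (R : realType) (B : completeNormedModType R)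
    (mu : {finite_measure set (borel B) -> \bar R}) :
  separable B ->
  exists (Bh : completeNormedModType R) (iota : {linear B -> Bh}),
    [/\ separable Bh,
        (forall x : B, `|iota x| = `|x|) &
        nu_MAP (pushforward mu (iota : borel B -> borel Bh))].
Proof.
move=> hsep.
have [e he] := dense_seq hsep.
have hg : forall k, exists gk : B -> R,
    [/\ forall y z, gk (y + z) = gk y + gk z,
        forall a y, gk (a *: y) = a * gk y,
        forall y, `|gk y| <= `|y| & gk (e k) = `|e k| ].
  by move=> k; exact: (norming he (e k)).
have [g hgP] := choice hg.
have g_add k := let: And4 h _ _ _ := hgP k in h.
have g_scale k := let: And4 _ h _ _ := hgP k in h.
have g_bd k := let: And4 _ _ h _ := hgP k in h.
have g_norm k := let: And4 _ _ _ h := hgP k in h.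
have rA := @rhoA R B e g g_bd.
have rB := @rhoB R B e g.
exists (Bh R (rho e g)), (emb g_add g_scale g_bd he : {linear B -> _}).
split.
- exact: (@Bh_separable R (rho e g) rA rB).
- move=> x; exact: (emb_iso g_add g_scale g_bd g_norm he x).
- exists (fun n => (Pn rA rB n : {linear _ -> _})); split; [|split].
  + move=> n; exact: Pn_rank.
  + move=> n x y; exact: Pn_lip.
  + exists set0; split.
      exists set0; split.
      * exact: measurable0.
      * by rewrite /pushforward preimage_set0 measure0.
      * by [].
    by move=> x _; exact: Pn_cvg.
Qed.
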